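(* Let $T$ be a monoid, $Y$ a semilattice and $\cdot$ a left partially defined action of $T$ on $Y$ satisfying axioms (A), (B), (C), such that $M(T,Y)$ is an ultra $F$-restriction monoid. Let $\circ$ be the reverse right partial action, and for $t\in T$ let $d_t$ and $r_t$ be the greatest elements of $\mathrm{dom}(\varphi_t)$ and $\mathrm{ran}(\varphi_t)$, respectively. For $t\in T$, $y\in Y$ put $t*y=t\cdot(y\wedge d_t)$ and $y\bullet t=(y\wedge r_t)\circ t$. Then: (1) $*$ and $\bullet$ form a double action of $T$ on $Y$ (so $Y*_mT$ can be formed); (2) $Y*_mT$ and $M(T,Y)$ are equal as $(2,1,1,0)$-algebras.
   Context: A left partial action of $T$ on $Y$: partial map $(t,y)\mapsto t\cdot y$, $1\cdot y=y$ always defined, and if $t\cdot y$, $s\cdot(t\cdot y)$ are defined then $(st)\cdot y$ is defined and equals it. With $\varphi_t\colon y\mapsto t\cdot y$: (A) $\mathrm{dom}\varphi_t$, $\mathrm{ran}\varphi_t$ are order ideals of $Y$; (B) $\varphi_t$ is an order-isomorphism $\mathrm{dom}\varphi_t\to\mathrm{ran}\varphi_t$; (C) $\mathrm{dom}\varphi_t\ne\varnothing$. Partially defined action: $(st)\cdot x$ defined iff $t\cdot x$ and $s\cdot(t\cdot x)$ defined. Reverse right partial action: $y\circ t$ defined iff $y\in\mathrm{ran}\varphi_t$, with $y\circ t=\varphi_t^{-1}(y)$. $M(T,Y)=\{(y,t)\colon y\circ t\text{ defined}\}$ with $(x,s)(y,t)=(s\cdot((x\circ s)\wedge y),st)$,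 $(y,t)^*=(y\circ t,1)$, $(y,t)^+=(y,1)$. Restriction semigroups: algebras $(S,\cdot,{}^*,{}^+)$ with $(S,\cdot)$ a semigroup satisfying $xx^*=x$, $x^*y^*=y^*x^*$, $(xy^* )^*=x^*y^*$, $x^*y=y(xy)^*$, $x^+x=x$, $x^+y^+=y^+x^+$, $(x^+y)^+=x^+y^+$, $xy^+=(xy)^+x$, $(x^+)^*=x^+$, $(x^* )^+=x^*$. $P(S)=\{x^*\}$; $\sigma$ the least congruence identifying projections; proper: ($a^*=b^*$, $a\sigma b$) or ($a^+=b^+$, $a\sigma b$) imply $a=b$; $F$-restriction: every $\sigma$-class has a maximum for the order $a\le b\iff a=eb$, $e\in P(S)$. Underlying left partial action of proper $S$: of $S/\sigma$ on $P(S)$, $t\cdot e$ defined iff some $a\in t$ has $a^*\ge e$, value $(ae)^+$. Ultra $F$-restriction monoid: proper $F$-restriction monoid whose underlying left partial action is a partially defined action. Double action of $T$ on a semilattice $Y$ with identity $\epsilon$: a left action $*$ and right action $\bullet$ with $t*(x\wedge y)=t*x\wedge t*y$, $(x\wedge y)\bullet t=x\bullet t\wedge y\bullet t$, $(t*x)\bullet t=\epsilon\bullet t\wedge x$, $t*(x\bullet t)=x\wedge t*\epsilon$. Then $Y*_mT=\{(y,t)\colon y\le t*\epsilon\}$ with $(x,s)(y,t)=(x\wedge s*y,st)$, $(y,t)^*=(y\bullet t,1)$, $(y,t)^+=(y,1)$, identity $(\epsilon,1)$. *)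

(* Defs.v *)
From HB Require Import structures.
From mathcomp Require Import all_boot all_order.
From Stdlib Require Import ClassicalEpsilon.

Set Implicit Arguments.
Unset Strict Implicit.
Unset Printing Implicit Defensive.

Import Order.TTheory.
Local Open Scope order_scope.

(* Abstract restriction monoids, carried by a subset P of an ambient type A  *)
Section Restriction.
Variables (A : Type) (P : A -> Prop) (mul : A -> A -> A) (star plus : A -> A)
          (one : A).

Definition restriction_monoid_on : Prop :=
  P one /\
  (forall x y, P x -> P y -> P (mul x y)) /\
  (forall x, P x -> P (star x) /\ P (plus x)) /\
  (forall x y z, P x -> P y -> P z -> mul (mul x y) z = mul x (mul y z)) /\
  (forall x, P x -> mul one x = x /\ mul x one = x) /\
  (forall x y, P x -> P y ->
     mul x (star x) = x /\
     mul (star x) (star y) = mul (star y) (star x) /\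
     star (mul x (star y)) = mul (star x) (star y) /\
     mul (star x) y = mul y (star (mul x y)) /\
     mul (plus x) x = x /\
     mul (plus x) (plus y) = mul (plus y) (plus x) /\
     plus (mul (plus x) y) = mul (plus x) (plus y) /\
     mul x (plus y) = mul (plus (mul x y)) x /\
     star (plus x) = plus x /\
     plus (star x) = star x).

Definition is_proj (e : A) : Prop := exists a, P a /\ e = star a.

Definition congruence_on (R : A -> A -> Prop) : Prop :=
  [/\ (forall a, P a -> R a a),
      (forall a b, R a b -> R b a),
      (forall a b c, R a b -> R b c -> R a c),
      (forall a b c d, P a -> P b -> P c -> P d -> R a b -> R c d ->
          R (mul a c) (mul b d)) &
      (forall a b, P a -> P b -> R a b -> R (star a) (star b) /\ R (plus a) (plus b))].

Definition sigma (a b : A) : Prop :=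
  P a /\ P b /\
  forall R, congruence_on R -> (forall e f, is_proj e -> is_proj f -> R e f) -> R a b.

Definition nat_le (a b : A) : Prop := exists e, is_proj e /\ a = mul e b.

Definition proper : Prop :=
  forall a b, P a -> P b -> sigma a b ->
    (star a = star b -> a = b) /\ (plus a = plus b -> a = b).

Definition F_restriction : Prop :=
  forall a, P a -> exists m, sigma a m /\ forall b, sigma a b -> nat_le b m.

(* Underlying left partial action of S/sigma on P(S): for the class [a] and a
   projection e, [a].e is defined iff some a' in [a] has a'^* >= e, and then
   [a].e = (a' e)^+ .  Classes are represented by elements of P. *)
Definition upa_defined (a e : A) : Prop :=
  exists a', sigma a a' /\ nat_le e (star a').
Definition upa_graph (a e f : A) : Prop :=
  exists a', sigma a a' /\ nat_le e (star a') /\ f = plus (mul a' e).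

Definition upa_partially_defined : Prop :=
  forall a b e, P a -> P b -> is_proj e ->
    (upa_defined (mul a b) e <->
       exists f, upa_graph b e f /\ upa_defined a f).

Definition ultra_F_restriction_monoid_on : Prop :=
  [/\ restriction_monoid_on, proper, F_restriction & upa_partially_defined].

End Restriction.

Section PartialAction.
Variables (T : monoidType) (d : Order.disp_t) (Y : tMeetSemilatticeType d).
Variable act : T -> Y -> option Y.

Definition pdom (t : T) (y : Y) : Prop := exists z, act t y = Some z.
Definition pran (t : T) (z : Y) : Prop := exists y, act t y = Some z.

Definition left_partial_action : Prop :=
  (forall y, act one y = Some y) /\
  (forall s t y z w, act t y = Some z -> act s z = Some w -> act (mul s t) y = Some w).

Definition axiomA : Prop := forall t,
  (forall x y, pdom t y -> x <= y -> pdom t x) /\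
  (forall x y, pran t y -> x <= y -> pran t x).

(* phi_t : dom -> ran is an order isomorphism (it is onto ran by definition) *)
Definition axiomB : Prop := forall t x y x' y',
  act t x = Some x' -> act t y = Some y' -> (x' <= y' <-> x <= y).

Definition axiomC : Prop := forall t, exists y, pdom t y.

Definition partially_defined_action : Prop := forall s t x,
  pdom (mul s t) x <-> exists z, act t x = Some z /\ pdom s z.

(* total value of t.y (meaningful only when defined) *)
Definition actv (t : T) (y : Y) : Y := odflt y (act t y).

(* reverse right partial action: y o t = phi_t^{-1}(y) (meaningful when
   y \in ran phi_t) *)
Definition rev (t : T) (y : Y) : Y :=
  epsilon (inhabits y) (fun x => act t x = Some y).

Definition inM (p : Y * T) : Prop := pran p.2 p.1.
Definition mulM (p q : Y * T) : Y * T :=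
  (actv p.2 (rev p.2 p.1 `&` q.1), mul p.2 q.2).
Definition starM (p : Y * T) : Y * T := (rev p.2 p.1, one).
Definition plusM (p : Y * T) : Y * T := (p.1, one).
Definition oneM : Y * T := (\top, one).

Definition greatest_of (S : Y -> Prop) (m : Y) : Prop :=
  S m /\ forall y, S y -> y <= m.
Definition dmax (t : T) : Y := epsilon (inhabits \top) (greatest_of (pdom t)).
Definition rmax (t : T) : Y := epsilon (inhabits \top) (greatest_of (pran t)).

Definition lstar (t : T) (y : Y) : Y := actv t (y `&` dmax t).
Definition rbullet (y : Y) (t : T) : Y := rev t (y `&` rmax t).

End PartialAction.

Section DoubleAction.
Variables (T : monoidType) (d : Order.disp_t) (Y : meetSemilatticeType d).
Variable eps : Y.
Variables (la : T -> Y -> Y) (ra : Y -> T -> Y).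

Definition double_action : Prop :=
  ((forall y, la one y = y) /\ (forall s t y, la (mul s t) y = la s (la t y))) /\
  ((forall y, ra y one = y) /\ (forall s t y, ra y (mul s t) = ra (ra y s) t)) /\
  (forall t x y, la t (x `&` y) = la t x `&` la t y) /\
  (forall t x y, ra (x `&` y) t = ra x t `&` ra y t) /\
  (forall t x, ra (la t x) t = ra eps t `&` x) /\
  (forall t x, la t (ra x t) = x `&` la t eps).

Definition inYmT (p : Y * T) : Prop := p.1 <= la p.2 eps.
Definition mulYmT (p q : Y * T) : Y * T := (p.1 `&` la p.2 q.1, mul p.2 q.2).
Definition starYmT (p : Y * T) : Y * T := (ra p.1 p.2, one).
Definition plusYmT (p : Y * T) : Y * T := (p.1, one).
Definition oneYmT : Y * T := (eps, one).

End DoubleAction.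

(* Main.v *)
Require Import Defs.
From mathcomp Require Import all_boot all_order.
From Stdlib Require Import ClassicalEpsilon.
Set Implicit Arguments.
Unset Strict Implicit.
Unset Printing Implicit Defensive.
Import Order.TTheory.
Local Open Scope order_scope.

Section Aux.
Variables (T : monoidType) (d : Order.disp_t) (Y : tMeetSemilatticeType d).
Variable act : T -> Y -> option Y.
Hypotheses (hL : left_partial_action act) (hA : axiomA act) (hB : axiomB act)
  (hC : axiomC act) (hP : partially_defined_action act).

Lemma hBB {t x y x' y'} : act t x = Some x' -> act t y = Some y' -> (x' <= y' <-> x <= y).
Proof. exact: hB. Qed.

Lemma act_inj t x y z : act t x = Some z -> act t y = Some z -> x = y.
Proof. by move=> h1 h2; apply/le_anti/andP; split; [apply/(hBB h1 h2) | apply/(hBB h2 h1)]. Qed.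

Lemma act_mono t x y x' y' : act t x = Some x' -> act t y = Some y' -> x <= y -> x' <= y'.
Proof. by move=> h1 h2 /(hBB h1 h2). Qed.

Lemma rev_spec t z : pran act t z -> act t (Defs.rev act t z) = Some z.
Proof. move=> h; rewrite /Defs.rev; exact: (epsilon_spec (inhabits z) (fun x => act t x = Some z)). Qed.

Lemma rev_eq t x z : act t x = Some z -> Defs.rev act t z = x.
Proof. move=> h; have hz : pran act t z by exists x.
exact: act_inj (rev_spec hz) h. Qed.

Lemma actv_eq t x z : act t x = Some z -> actv act t x = z.
Proof. by rewrite /actv => ->. Qed.

Lemma act1 y : act one y = Some y.
Proof. exact: hL.1. Qed.

Lemma actv1 y : actv act one y = y.
Proof. exact: actv_eq (act1 y). Qed.

Lemma rev1 y : Defs.rev act one y = y.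
Proof. exact: rev_eq (act1 y). Qed.

Lemma dom_act t x : pdom act t x -> act t x = Some (actv act t x).
Proof. by case=> z h; rewrite (actv_eq h). Qed.

Lemma act_meet t a b a' b' : act t a = Some a' -> act t b = Some b' ->
  act t (a `&` b) = Some (a' `&` b').
Proof.
move=> ha hb.
have hd : pdom act t (a `&` b) by apply: (hA t).1 (leIl a b); exists a'.
have hc := dom_act hd; set c := actv act t (a `&` b) in hc *.
have hm : pran act t (a' `&` b') by apply: (hA t).2 (leIl a' b'); exists a.
have he := rev_spec hm; set e := Defs.rev act t _ in he.
have ea : e <= a by apply/(hBB he ha); rewrite leIl.
have eb : e <= b by apply/(hBB he hb); rewrite leIr.
rewrite hc; congr Some; apply/le_anti/andP; split.
  by rewrite lexI (act_mono hc ha (leIl _ _)) (act_mono hc hb (leIr _ _)).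
by apply/(hBB he hc); rewrite lexI ea eb.
Qed.


Lemma mulM1 y p : mulM act (y, one) p = (y `&` p.1, p.2).
Proof. by rewrite /mulM /= rev1 actv1 mul1g. Qed.

Lemma proj1 y : is_proj (inM act) (starM act) (y, one).
Proof. exists (y, one); split; first by exists y; exact: act1. by rewrite /starM /= rev1. Qed.

Lemma in1 y : inM act (y, one).
Proof. by exists y; exact: act1. Qed.

Lemma sigma_t t y z : pran act t y -> pran act t z ->
  sigma (inM act) (mulM act) (starM act) (@plusM T d Y) (y, t) (z, t).
Proof.
move=> hy hz; have hy' : inM act (y, t) by []. have hz' : inM act (z, t) by [].
split; first by []. split; first by [].
move=> R [Rr Rs Rtr Rm _] hpr.
have h1 : R (z `&` y, t) (y, t).
  have := Rm _ _ _ _ (in1 z) (in1 y) hy' hy' (hpr _ _ (proj1 z) (proj1 y)) (Rr _ hy').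
  by rewrite !mulM1 /= meetxx.
have h2 : R (y `&` z, t) (z, t).
  have := Rm _ _ _ _ (in1 y) (in1 z) hz' hz' (hpr _ _ (proj1 y) (proj1 z)) (Rr _ hz').
  by rewrite !mulM1 /= meetxx.
rewrite meetC in h1.
exact: Rtr (Rs _ _ h1) h2.
Qed.

Lemma natle_t w t m : nat_le (inM act) (mulM act) (starM act) (w, t) m ->
  m.2 = t /\ w <= m.1.
Proof.
case=> e [[a [_ ->]] h]; move: h; rewrite /starM mulM1 => -[-> ->]; split=> //.
exact: leIr.
Qed.

Hypothesis hF : F_restriction (inM act) (mulM act) (starM act) (@plusM T d Y).

Lemma ran_greatest t : exists m, greatest_of (pran act t) m.
Proof.
case: (hC t) => y [z hz].
have Pz : inM act (z, t) by exists y.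
case: (hF Pz) => m [[_ [Pm _]] hmax].
have [e2 _] := natle_t (hmax _ (sigma_t Pz Pz)).
exists m.1; split; first by move: Pm; rewrite /inM e2.
move=> w hw; exact: (natle_t (hmax _ (sigma_t Pz hw))).2.
Qed.

Lemma rmax_spec t : greatest_of (pran act t) (rmax act t).
Proof. have [m hm] := ran_greatest t; exact: (epsilon_spec (inhabits \top) _ (ex_intro _ m hm)). Qed.

Lemma ran_le t z : pran act t z -> z <= rmax act t.
Proof. exact: (rmax_spec t).2. Qed.

Lemma dom_greatest t : exists m, greatest_of (pdom act t) m.
Proof.
have [hr _] := rmax_spec t.
have he := rev_spec hr.
exists (Defs.rev act t (rmax act t)); split; first by eexists; exact: he.
move=> x [x' hx]; apply/(hBB hx he); apply: ran_le; by exists x.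
Qed.

Lemma dmax_spec t : greatest_of (pdom act t) (dmax act t).
Proof. have [m hm] := dom_greatest t; exact: (epsilon_spec (inhabits \top) _ (ex_intro _ m hm)). Qed.

Lemma dom_le t x : pdom act t x -> x <= dmax act t.
Proof. exact: (dmax_spec t).2. Qed.

Lemma act_d t : act t (dmax act t) = Some (rmax act t).
Proof.
have hd := dom_act (dmax_spec t).1; rewrite hd; congr Some.
have [hr _] := rmax_spec t; have he := rev_spec hr.
apply/le_anti/andP; split; first by apply: ran_le; eexists; exact: hd.
apply/(hBB he hd); apply: dom_le; eexists; exact: he.
Qed.

Lemma act_lstar t y : act t (y `&` dmax act t) = Some (lstar act t y).
Proof.
apply: dom_act; apply: (hA t).1 (leIr _ _); exact: (dmax_spec t).1.
Qed.

Lemma ran_rb t y : pran act t (y `&` rmax act t).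
Proof. apply: (hA t).2 (leIr _ _); exact: (rmax_spec t).1. Qed.

Lemma act_rb t y : act t (rbullet act y t) = Some (y `&` rmax act t).
Proof. exact: rev_spec (ran_rb t y). Qed.

Lemma dmax1 : dmax act one = \top.
Proof. apply/le_anti; rewrite lex1 /=; apply: dom_le; exists \top; exact: act1. Qed.

Lemma rmax1 : rmax act one = \top.
Proof. apply/le_anti; rewrite lex1 /=; apply: ran_le; exists \top; exact: act1. Qed.

Lemma lstar_one y : lstar act one y = y.
Proof. by rewrite /lstar dmax1 meetx1 actv1. Qed.

Lemma rb_one y : rbullet act y one = y.
Proof. by rewrite /rbullet rmax1 meetx1 rev1. Qed.

Lemma lstar_mul s t y : lstar act (mul s t) y = lstar act s (lstar act t y).
Proof.
have pw := act_lstar t y.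
have pu := act_lstar s (lstar act t y).
set u := lstar act t y `&` dmax act s in pu.
have ur : pran act t u by apply: (hA t).2 (leIl _ _); eexists; exact: pw.
have pv := rev_spec ur; set v := Defs.rev act t u in pv.
have vw : v <= y `&` dmax act t by apply/(hBB pv pw); rewrite leIl.
have pst := hL.2 _ _ _ _ _ pv pu.
have px := act_lstar (mul s t) y.
have [z [hz hzs]] := (hP s t (y `&` dmax act (mul s t))).1 (ex_intro _ _ px).
suff e : y `&` dmax act (mul s t) = v by move: px; rewrite e pst => -[].
apply/le_anti/andP; split.
  apply/(hBB hz pv); rewrite lexI (dom_le hzs) andbT.
  apply: (act_mono hz pw); rewrite lexI leIl /=; apply: dom_le; eexists; exact: hz.
rewrite lexI (le_trans vw (leIl _ _)) /=; apply: dom_le; eexists; exact: pst.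
Qed.

Lemma rb_mul s t y : rbullet act y (mul s t) = rbullet act (rbullet act y s) t.
Proof.
set L := rbullet act y (mul s t).
set b := rbullet act y s.
have hb := act_rb s y.
have hR := act_rb t b; set R := rbullet act b t in hR.
set a := b `&` rmax act t in hR.
have ads : pdom act s a by apply: (hA s).1 (leIl _ _); eexists; exact: hb.
have hc := dom_act ads; set c := actv act s a in hc.
have hRc := hL.2 _ _ _ _ _ hR hc.
have hL' := act_rb (mul s t) y.
have cy : c <= y.
  apply: le_trans (leIl _ (rmax act s)); exact: act_mono hc hb (leIl _ _).
have [z [hz [z' hz']]] := (hP s t L).1 (ex_intro _ _ hL').
have := hL.2 _ _ _ _ _ hz hz'; rewrite hL' => -[ez'].
rewrite -ez' in hz'.
have zb : z <= b.
  apply/(hBB hz' hb); rewrite lexI leIl /=; apply: ran_le; eexists; exact: hz'.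
have za : z <= a by rewrite lexI zb /=; apply: ran_le; eexists; exact: hz.
have xc := act_mono hz' hc za.
have ce : y `&` rmax act (mul s t) = c.
  apply/le_anti; rewrite xc lexI cy /=; apply: ran_le; eexists; exact: hRc.
rewrite ce in hL'.
exact: act_inj hL' hRc.
Qed.

Lemma lstar_meet t x y : lstar act t (x `&` y) = lstar act t x `&` lstar act t y.
Proof.
have := act_meet (act_lstar t x) (act_lstar t y).
by rewrite meetACA meetxx act_lstar => -[].
Qed.

Lemma rb_meet t x y : rbullet act (x `&` y) t = rbullet act x t `&` rbullet act y t.
Proof.
have := act_meet (act_rb t x) (act_rb t y).
rewrite meetACA meetxx => h; exact: rev_eq h.
Qed.

Lemma rb_lstar t x : rbullet act (lstar act t x) t = rbullet act \top t `&` x.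
Proof.
have h := act_lstar t x.
rewrite /rbullet meet_l; last by apply: ran_le; eexists; exact: h.
by rewrite (rev_eq h) meet1x (rev_eq (act_d t)) meetC.
Qed.

Lemma lstar_rb t x : lstar act t (rbullet act x t) = x `&` lstar act t \top.
Proof.
have h := act_rb t x.
rewrite /lstar meet_l; last by apply: dom_le; eexists; exact: h.
by rewrite (actv_eq h) meet1x (actv_eq (act_d t)).
Qed.

Lemma main_aux :
  (forall t, (exists m, greatest_of (pdom act t) m) /\
             (exists m, greatest_of (pran act t) m)) /\
  double_action \top (lstar act) (rbullet act) /\
  [/\ (forall p, inYmT \top (lstar act) p <-> inM act p),
      (forall p q, inM act p -> inM act q ->
          mulYmT (lstar act) p q = mulM act p q),
      (forall p, inM act p -> starYmT (rbullet act) p = starM act p),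
      (forall p, inM act p -> @plusYmT T d Y p = @plusM T d Y p) &
      @oneYmT T d Y \top = @oneM T d Y].
Proof.
split; first by move=> t; split; [exact: dom_greatest | exact: ran_greatest].
split.
  split; first by split; [exact: lstar_one | exact: lstar_mul].
  split; first by split; [exact: rb_one | exact: rb_mul].
  split; first exact: lstar_meet.
  split; first exact: rb_meet.
  split; [exact: rb_lstar | exact: lstar_rb].
have lt1 t : lstar act t \top = rmax act t by rewrite /lstar meet1x (actv_eq (act_d t)).
split.
- case=> y t; rewrite /inYmT /= lt1; split; last exact: ran_le.
  move=> h; apply: (hA t).2 h; exact: (rmax_spec t).1.
- case=> p1 s [q1 t] hp hq; rewrite /mulYmT /mulM /=; congr pair.
  have ha := rev_spec hp; set a := Defs.rev act s p1 in ha *.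
  have := act_meet ha (act_lstar s q1).
  rewrite meetCA (meet_l (dom_le (ex_intro _ _ ha))) meetC => h.
  by rewrite (actv_eq h).
- case=> y t hp; rewrite /starYmT /starM /rbullet /= meet_l //; exact: ran_le.
- by [].
- by [].
Qed.
End Aux.

Theorem proposition3p13 (T : monoidType) (d : Order.disp_t)
  (Y : tMeetSemilatticeType d) (act : T -> Y -> option Y) :
  left_partial_action act -> axiomA act -> axiomB act -> axiomC act ->
  partially_defined_action act ->
  ultra_F_restriction_monoid_on (@inM T d Y act) (mulM act) (starM act)
    (@plusM T d Y) (@oneM T d Y) ->
  (* d_t and r_t exist *)
  (forall t, (exists m, greatest_of (pdom act t) m) /\
             (exists m, greatest_of (pran act t) m)) /\
  (* (1) double action *)
  double_action \top (lstar act) (rbullet act) /\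
  (* (2) Y *_m T = M(T,Y) as (2,1,1,0)-algebras *)
  [/\ (forall p, inYmT \top (lstar act) p <-> inM act p),
      (forall p q, inM act p -> inM act q ->
          mulYmT (lstar act) p q = mulM act p q),
      (forall p, inM act p -> starYmT (rbullet act) p = starM act p),
      (forall p, inM act p -> @plusYmT T d Y p = @plusM T d Y p) &
      @oneYmT T d Y \top = @oneM T d Y].
Proof.
move=> hL hA hB hC hP [_ _ hF _].
exact: main_aux hL hA hB hC hP hF.
Qed.
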